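(* Let $r \ge 3$ be an integer. For $n \ge 1$ let $g^{\mathrm{ns}}_r(n) = \max\{|\mathcal{F}| : \mathcal{F} \subseteq \{0,1\}^n \text{ contains no near-sunflower of size } r\}$ and $g^{\mathrm{ff}}_r(n) = \max\{|\mathcal{F}| : \mathcal{F} \subseteq \{0,1\}^n \text{ contains no focal family of size } r\}$. Then: (a) for every $n$, $g^{\mathrm{ns}}_r(n) \le g^{\mathrm{ff}}_r(n) \le (r-1)\, 2^{\lceil \frac{(r-2)n}{r-1} \rceil}$; (b) there exist positive constants $c^{\mathrm{ns}}_r$ and $c^{\mathrm{ff}}_r$ (depending only on $r$) such that for every $n$, $g^{\mathrm{ns}}_r(n) \ge c^{\mathrm{ns}}_r \left(\frac{2}{(r+1)^{1/(r-1)}}\right)^n$ and $g^{\mathrm{ff}}_r(n) \ge c^{\mathrm{ff}}_r \left(\frac{2}{r^{1/(r-1)}}\right)^n$.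
   Context: Vectors in $\{0,1\}^n$ are identified with subsets of $[n]=\{1,\dots,n\}$. A family $\mathcal{H}$ of $r$ distinct subsets of $[n]$ is a near-sunflower of size $r$ if every $i \in [n]$ belongs to exactly $0$, $1$, $r-1$ or $r$ of the sets in $\mathcal{H}$. A family $x^{(0)}, x^{(1)}, \dots, x^{(r-1)}$ of $r$ distinct vectors in $\{0,1\}^n$ is focal (with focus $x^{(0)}$) if for every coordinate $i \in [n]$, at least $r-2$ of the $r-1$ entries $x^{(1)}_i, \dots, x^{(r-1)}_i$ are equal to $x^{(0)}_i$. A family $\mathcal{F}$ contains a focal family of size $r$ if some $r$ distinct members of $\mathcal{F}$, with some choice of one of them as focus, form a focal family. *)

(* Defs.v *)
From HB Require Import structures.
From mathcomp Require Import all_boot all_order all_algebra.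
Set Implicit Arguments. Unset Strict Implicit. Unset Printing Implicit Defensive.

(* Vectors in {0,1}^n are identified with subsets of [n] = 'I_n. *)

Definition near_sunflower (n r : nat) (H : {set {set 'I_n}}) : bool :=
  (#|H| == r) &&
  [forall i : 'I_n, #|[set A in H | i \in A]| \in [:: 0; 1; r.-1; r]].

Definition has_near_sunflower (n r : nat) (F : {set {set 'I_n}}) : bool :=
  [exists H : {set {set 'I_n}}, (H \subset F) && near_sunflower r H].

(* x0 (focus) together with the r-1 distinct other members S (x0 not in S)
   form a focal family of size r: for every coordinate i, at least r-2 of the
   r-1 members of S agree with x0 at i. *)
Definition focal (n r : nat) (x0 : {set 'I_n}) (S : {set {set 'I_n}}) : bool :=
  (x0 \notin S) && (#|S| == r.-1) &&
  [forall i : 'I_n, r.-2 <= #|[set B in S | (i \in B) == (i \in x0)]|].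

Definition has_focal (n r : nat) (F : {set {set 'I_n}}) : bool :=
  [exists x0 : {set 'I_n}, exists S : {set {set 'I_n}},
     [&& x0 \in F, S \subset F & focal r x0 S]].

Definition g_ns (r n : nat) : nat :=
  \max_(F : {set {set 'I_n}} | ~~ has_near_sunflower r F) #|F|.

Definition g_ff (r n : nat) : nat :=
  \max_(F : {set {set 'I_n}} | ~~ has_focal r F) #|F|.

Definition ceil_div (a b : nat) : nat := (a + b.-1) %/ b.

(* Main.v *)
Require Import Defs.
From HB Require Import structures.
From mathcomp Require Import all_boot all_order all_algebra.
From mathcomp Require Import all_classical all_reals all_analysis.
Import Order.TTheory GRing.Theory Num.Theory.
From mathcomp Require Import zify lra.
Set Implicit Arguments. Unset Strict Implicit. Unset Printing Implicit Defensive.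

Lemma card_sepU1 (T : finType) (x0 : T) (S : {set T}) (P : pred T) :
  x0 \notin S -> #|[set A in x0 |: S | P A]| = P x0 + #|[set A in S | P A]|.
Proof.
move=> nx; case hP: (P x0).
  have -> : [set A in x0 |: S | P A] = x0 |: [set A in S | P A].
    by apply/setP=> y; rewrite !inE; case: eqP => // ->; rewrite hP.
  by rewrite finset.cardsU1 inE (negbTE nx).
have -> : [set A in x0 |: S | P A] = [set A in S | P A].
  by apply/setP=> y; rewrite !inE; case: eqP => [->|] //=; rewrite hP ?andbF.
by [].
Qed.

Lemma card_sepC (T : finType) (S : {set T}) (P : pred T) :
  #|[set A in S | P A]| + #|[set A in S | ~~ P A]| = #|S|.
Proof.
rewrite -(cardsID [set A | P A] S); congr (_ + _); apply: eq_card => y;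
  by rewrite !inE andbC.
Qed.

Lemma focal_ns n r (x0 : {set 'I_n}) S : 2 <= r ->
  focal r x0 S -> near_sunflower r (x0 |: S).
Proof.
move=> hr /andP[/andP[nx /eqP cS] /forallP hf].
apply/andP; split.
  by rewrite finset.cardsU1 nx cS; apply/eqP; lia.
apply/forallP=> i; rewrite card_sepU1 //.
have := hf i; have := card_sepC S (fun B => i \in B).
case hi: (i \in x0) => /=.
  have -> : [set B in S | (i \in B) == true] = [set B in S | i \in B].
    by apply/setP=> B; rewrite !inE eqb_id.
  rewrite cS => h1 h2.
  set a := #|[set A in S | i \in A]| in h1 h2 *.
  have : (1 + a == r.-1) || (1 + a == r) by lia.
  by case/orP=> /eqP ->; rewrite !inE eqxx ?orbT.
have -> : [set B in S | (i \in B) == false] = [set B in S | ~~ (i \in B)].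
  by apply/setP=> B; rewrite !inE eqbF_neg.
rewrite cS => h1 h2.
set a := #|[set A in S | i \in A]| in h1 h2 *.
set b := #|[set A in S | i \notin A]| in h1 h2 *.
have : (a == 0) || (a == 1) by lia.
by case/orP=> /eqP ->; rewrite !inE eqxx ?orbT.
Qed.

Lemma ns_le_ff r n : 2 <= r -> g_ns r n <= g_ff r n.
Proof.
move=> hr; apply/bigmax_leqP => F hF; apply: leq_bigmax_cond.
apply: contra hF => /existsP[x0 /existsP[S /and3P[xF SF foc]]].
apply/existsP; exists (x0 |: S); rewrite focal_ns // andbT.
by apply/fintype.subsetP=> y; rewrite !inE => /orP[/eqP ->|/(fintype.subsetP SF)].
Qed.

Lemma set_neq_ex (T : finType) (x y : {set T}) : y != x -> exists i, (i \in y) != (i \in x).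
Proof.
move=> h; apply/existsP; apply: contraR h => /existsPn h; apply/eqP/setP => i.
by move: (h i); case: (i \in y); case: (i \in x).
Qed.

Lemma setD_agree (T : finType) (x y I : {set T}) i :
  y :\: I = x :\: I -> i \notin I -> (i \in y) = (i \in x).
Proof. by move/setP/(_ i); rewrite !inE => e /negPf hi; move: e; rewrite hi. Qed.

Definition Ipart n k (j : nat) : {set 'I_n} := [set i : 'I_n | i %% k == j].

Lemma Ipart_card n k (j : nat) : j < k -> n %/ k <= #|Ipart n k j|.
Proof.
move=> jk.
have hlt : forall t : 'I_(n %/ k), t * k + j < n.
  move=> t; have := ltn_ord t; have := leq_trunc_div n k; nia.
pose f (t : 'I_(n %/ k)) : 'I_n := Ordinal (hlt t).
have finj : injective f.
  move=> t1 t2 /(congr1 val) /= e; apply: val_inj => /=.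
  have k0 : 0 < k by lia.
  by apply/eqP; rewrite -(eqn_pmul2r k0) -(eqn_add2r j) e.
rewrite -[n %/ k]card_ord -(card_imset _ finj); apply: subset_leq_card.
apply/fintype.subsetP=> i /imsetP[t _ ->]; rewrite inE /= modnMDl modn_small //.
Qed.

Lemma ceil_ok n k : 0 < k -> n - n %/ k <= ceil_div (k.-1 * n) k.
Proof.
move=> k0; rewrite /ceil_div leq_divRL //.
have e := divn_eq n k; have s := ltn_pmod n k0.
set q := n %/ k in e *; set s' := n %% k in e s *.
nia.
Qed.

Lemma card_bigcup_le (I T : finType) (B : I -> {set T}) :
  #|\bigcup_(j : I) B j| <= \sum_(j : I) #|B j|.
Proof.
apply: (big_ind2 (fun (U : {set T}) s => #|U| <= s)) => //.
  by rewrite cards0.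
move=> U1 s1 U2 s2 h1 h2; rewrite finset.cardsU; lia.
Qed.

Lemma ff_upper r n : 3 <= r -> g_ff r n <= r.-1 * 2 ^ ceil_div (r.-2 * n) r.-1.
Proof.
move=> hr.
set k := r.-1; have k0 : 0 < k by rewrite /k; lia.
apply/bigmax_leqP => F hF.
pose I (j : 'I_k) := Ipart n k j.
pose bad (j : 'I_k) := [set x in F | [forall y in F, (y :\: I j == x :\: I j) ==> (y == x)]].
have Fsub : F \subset \bigcup_(j : 'I_k) bad j.
  apply/fintype.subsetP => x xF; apply/negPn/negP => hx; apply: (negP hF).
  have : forall j : 'I_k, exists y, [&& y \in F, y != x & y :\: I j == x :\: I j].
    move=> j; have : x \notin bad j by apply: contra hx => h; apply/bigcupP; exists j.
    rewrite inE xF /= => /forallPn [y]; rewrite negb_imply => /andP[yF].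
    rewrite negb_imply => /andP[e ne]; exists y; by rewrite yF ne e.
  case/fin_all_exists => yf hy.
  have yinj : injective yf.
    move=> j1 j2 e; apply/eqP; apply/negPn/negP => ne.
    have /and3P[_ n1 /eqP e1] := hy j1; have /and3P[_ _ /eqP e2] := hy j2.
    have [i hi] := set_neq_ex n1.
    have iI1 : i \in I j1.
      by apply/negPn/negP => hn; move: hi; rewrite (setD_agree e1 hn) eqxx.
    have iI2 : i \notin I j2.
      move: iI1; rewrite !inE => /eqP ->; exact: ne.
    by move: hi; rewrite e (setD_agree e2 iI2) eqxx.
  apply/existsP; exists x; apply/existsP; exists [set yf j | j : 'I_k].
  rewrite xF /=; apply/andP; split.
    by apply/fintype.subsetP => y /imsetP[j _ ->]; have /and3P[] := hy j.
  rewrite /focal; apply/andP; split; first apply/andP; first split.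
  - apply/imsetP => -[j _ e]; have /and3P[_ ne _] := hy j.
    by move: ne; rewrite -e eqxx.
  - by rewrite card_imset // card_ord.
  apply/forallP => i.
  pose j0 : 'I_k := Ordinal (ltn_pmod i k0).
  have hsub : [set yf j | j in [set~ j0]] \subset [set B in [set yf j | j : 'I_k] | (i \in B) == (i \in x)].
    apply/fintype.subsetP => y /imsetP[j jj ->]; rewrite inE mem_imset //=.
    have /and3P[_ _ /eqP e] := hy j.
    rewrite (setD_agree e) //; rewrite !inE in jj *.
    by apply: contra jj => /eqP h; apply/eqP/val_inj.
  apply: leq_trans (subset_leq_card hsub).
  by rewrite card_imset // cardsC1 card_ord.
apply: leq_trans (subset_leq_card Fsub) _.
apply: leq_trans (card_bigcup_le _) _.
rewrite -[k in k * _]card_ord -sum_nat_const; apply: leq_sum => j _.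
have h1 : #|bad j| <= 2 ^ #|~: I j|.
  have inj : {in bad j &, injective (fun x => x :\: I j)}.
    move=> x1 x2; rewrite !inE => /andP[_ /forallP h] /andP[x2F _] e.
    by have := h x2; rewrite x2F e eqxx /= => /eqP.
  rewrite -(card_in_imset inj) -card_powerset; apply: subset_leq_card.
  apply/fintype.subsetP => y /imsetP[x _ ->]; rewrite inE finset.setDE subsetIr //.
apply: leq_trans h1 _; apply: leq_pexp2l => //.
have := cardsC (I j); rewrite card_ord => e.
have := Ipart_card n (ltn_ord j); have := ceil_ok n k0; rewrite -/(I j); lia.
Qed.

Lemma fam_card (T : finType) p (H : {set T}) :
  #|[set c : {ffun T -> 'I_p.+1} | H \subset [set x | c x == ord0]]| = p.+1 ^ (#|T| - #|H|).
Proof.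
have -> : #|[set c : {ffun T -> 'I_p.+1} | H \subset [set x | c x == ord0]]|
   = #|family (fun x : T => if x \in H then pred1 (@ord0 p) else predT)|.
  apply: eq_card => c; rewrite !inE; apply/fintype.subsetP/familyP => h x.
    by case: ifP => // /h; rewrite inE.
  by move=> xH; have := h x; rewrite xH inE.
rewrite card_family foldrE big_map big_enum /=.
rewrite (eq_bigr (fun x => if x \in ~: H then p.+1 else 1)); last first.
  by move=> x _; rewrite inE; case: (x \in H) => /=; rewrite ?card1 ?cardT ?size_enum_ord // card_ord.
rewrite -big_mkcond prod_nat_const /=.
by rewrite -(cardsC H) addKn.
Qed.

Lemma dcount (I J : finType) (P : I -> J -> bool) :
  \sum_i #|[set j | P i j]| = \sum_j #|[set i | P i j]|.
Proof.
have e : forall (K : finType) (Q : pred K), #|[set k | Q k]| = \sum_k (Q k : nat).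
  by move=> K Q; rewrite -sum1_card big_mkcond /=; apply: eq_bigr => k _; rewrite inE.
rewrite (eq_bigr (fun i => \sum_j (P i j : nat))); last by move=> i _; rewrite e.
rewrite exchange_big; apply: eq_bigr => j _; by rewrite e.
Qed.

Lemma alteration (T : finType) (Bad : {set {set T}}) (r p : nat) : 0 < r ->
  (forall H, H \in Bad -> r <= #|H|) ->
  exists F : {set T}, (forall H, H \in Bad -> ~~ (H \subset F)) /\
    p.+1 ^ r.-1 * #|T| <= p.+1 ^ r * #|F| + #|Bad|.
Proof.
move=> r0 hB.
set q := p.+1; set N := #|T|.
pose Fc (c : {ffun T -> 'I_q}) := [set x | c x == ord0].
pose bc (c : {ffun T -> 'I_q}) := [set H in Bad | H \subset Fc c].
have S1 : \sum_c #|Fc c| = N * q ^ N.-1.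
  rewrite (dcount (fun (c : {ffun T -> 'I_q}) (x : T) => c x == ord0)) -/N.
  rewrite (eq_bigr (fun _ => q ^ N.-1)); last first.
    move=> x _; have := fam_card p [set x]; rewrite cards1 subn1 -/q -/N => <-; apply: eq_card => c.
    by rewrite !inE finset.sub1set inE.
  by rewrite sum_nat_const mulnC.
have S2 : q ^ r * \sum_c #|bc c| <= q ^ N * #|Bad|.
  rewrite (dcount (fun (c : {ffun T -> 'I_q}) (H : {set T}) => (H \in Bad) && (H \subset Fc c))) big_distrr /=.
  rewrite -sum1_card big_distrr /= [X in _ <= X]big_mkcond /=.
  apply: leq_sum => H _; case hH: (H \in Bad); last first.
    rewrite (eq_card (B := pred0)) ?card0 ?muln0 // => c; by rewrite !inE.
  rewrite muln1 (eq_card (B := [set c : {ffun T -> 'I_q} | H \subset [set x | c x == ord0]])); last first.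
    by move=> c; rewrite !inE.
  rewrite fam_card -expnD leq_pexp2l //.
  have := hB H hH; have := max_card H; rewrite -/N; lia.
have [c hc] : exists c, q ^ r.-1 * N + q ^ r * #|bc c| <= q ^ r * #|Fc c| + #|Bad|.
  apply/existsP; apply: contraT => /existsPn hn.
  have key : \sum_(c : {ffun T -> 'I_q}) (q ^ r * #|Fc c| + #|Bad| + 1)
             <= \sum_(c : {ffun T -> 'I_q}) (q ^ r.-1 * N + q ^ r * #|bc c|).
    by apply: leq_sum => c _; have := hn c; rewrite -ltnNge addn1.
  rewrite !big_split /= -!big_distrr /= !sum_nat_const card_ffun card_ord -/N S1 in key.
  have eqr : q ^ r = q * q ^ r.-1 by rewrite -expnS prednK.
  have eqN : N = 0 \/ q ^ N = q * q ^ N.-1.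
    by case: (N) => [|m]; [left | right; rewrite expnS].
  have qN : 0 < q ^ N by rewrite expn_gt0.
  move: key S2 eqr eqN qN.
  set a := q ^ r.-1; set b := q ^ N.-1; set QN := q ^ N; set QR := q ^ r.
  set s2 := \sum_c #|bc c|; set B := #|Bad|.
  move=> key S2 eqr eqN qN; case: eqN => [N0|eqN].
    rewrite N0 in key; nia.
  nia.
pose pk (H : {set T}) := [pick y in H].
pose R := [set x in pmap pk (enum (bc c))].
exists (Fc c :\: R); split.
  move=> H HB; apply/negP => HF.
  have Hbc : H \in bc c.
    by rewrite inE HB; apply: fintype.subset_trans HF _; apply: finset.subsetDl.
  case hp: (pk H) => [y|]; last first.
    move: hp; rewrite /pk; case: pickP => // h0 _.
    have := hB H HB; rewrite (eq_card0 h0); lia.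
  have yH : y \in H by move: hp; rewrite /pk; case: pickP => // z zH [<-].
  have yR : y \in R.
    rewrite inE mem_pmap; apply/mapP; exists H; rewrite ?mem_enum //.
  by have := fintype.subsetP HF y yH; rewrite inE yR.
have cR : #|R| <= #|bc c|.
  rewrite cardsE; apply: leq_trans (card_size _) _.
  by rewrite size_pmap cardE count_size.
have cD : #|Fc c| - #|R| <= #|Fc c :\: R|.
  by rewrite cardsD leq_sub2l // subset_leq_card // subsetIr.
have hq : q ^ r * #|Fc c| <= q ^ r * #|Fc c :\: R| + q ^ r * #|bc c|.
  rewrite -mulnDr leq_mul2l; apply/orP; right; lia.
lia.
Qed.

Lemma card_sets_n n : #|{set 'I_n}| = 2 ^ n.
Proof. by rewrite -cardsT -powersetT card_powerset cardsT card_ord. Qed.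

Lemma enum_bij (T : finType) (S : {set T}) k : #|S| = k ->
  exists e : 'I_k -> T, injective e /\ S = [set e j | j : 'I_k].
Proof.
move=> <-; exists (@enum_val T (mem S)); split; first exact: enum_val_inj.
apply/setP => x; apply/idP/imsetP => [xS|[j _ ->]]; last exact: enum_valP.
by exists (enum_rank_in xS x); rewrite ?enum_rankK_in.
Qed.

Lemma pick_le1 (T : finType) (A : {set T}) j :
  #|A| <= 1 -> ([pick x in A] == Some j) = (j \in A).
Proof.
move=> h; case: pickP => [x xA|h0]; last by rewrite h0.
apply/eqP/idP => [[<-] //|jA]; congr Some.
by move/card_le1_eqP: h => /(_ x j xA jA).
Qed.

Lemma card_pre (T : finType) k (e : 'I_k -> T) (P : pred T) :
  injective e -> #|[set j | P (e j)]| = #|[set A in [set e j | j : 'I_k] | P A]|.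
Proof.
move=> ei; rewrite -(card_imset _ ei); apply: eq_card => A.
apply/imsetP/idP => [[j]|]; first by rewrite !inE => pj ->; rewrite mem_imset.
by rewrite !inE => /andP[/imsetP[j _ ->] pj]; exists j; rewrite ?inE.
Qed.

Definition Dns n r (c : {ffun 'I_n -> bool * option 'I_r}) (j : 'I_r) : {set 'I_n} :=
  [set i | (c i).1 (+) ((c i).2 == Some j)].
Definition decns n r (c : {ffun 'I_n -> bool * option 'I_r}) := [set Dns c j | j : 'I_r].
Definition BadNS n r : {set {set {set 'I_n}}} :=
  [set H | (H \in [set decns c | c : {ffun 'I_n -> bool * option 'I_r}]) && (r <= #|H|)].

Lemma BadNS_card n r : #|BadNS n r| <= 2 ^ n * r.+1 ^ n.
Proof.
apply: leq_trans (_ : #|[set decns c | c : {ffun 'I_n -> bool * option 'I_r}]| <= _).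
  by apply: subset_leq_card; apply/fintype.subsetP => H; rewrite inE => /andP[].
apply: leq_trans (leq_imset_card _ _) _.
by rewrite card_ffun card_prod card_bool card_option !card_ord expnMn.
Qed.

Lemma ns_bad n r (H : {set {set 'I_n}}) : near_sunflower r H -> H \in BadNS n r.
Proof.
move=> /andP[/eqP cH /forallP hc].
have [e [ei He]] := enum_bij cH.
pose Ti (i : 'I_n) := [set j | i \in e j].
have cT : forall i, #|Ti i| \in [:: 0; 1; r.-1; r].
  by move=> i; rewrite /Ti (card_pre (fun A : {set 'I_n} => i \in A) ei) -He; exact: hc.
pose c := [ffun i => if #|Ti i| <= 1 then (false, [pick j in Ti i])
                     else (true, [pick j in ~: Ti i])].
have De : forall j, Dns c j = e j.
  move=> j; apply/setP => i; rewrite /Dns inE ffunE.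
  case: ifP => h /=; first by rewrite pick_le1 // inE.
  rewrite pick_le1 ?inE ?negbK //.
  have := cardsC (Ti i); rewrite card_ord; have := cT i; rewrite !inE.
  move: h; lia.
rewrite inE cH leqnn andbT; apply/imsetP; exists c => //.
by rewrite He /decns; apply/setP => A; apply/imsetP/imsetP => -[j _ ->]; exists j; rewrite ?De.
Qed.

Definition Dff n k (c : {ffun 'I_n -> bool * option 'I_k}) (j : option 'I_k) : {set 'I_n} :=
  [set i | (c i).1 (+) ((j != None) && ((c i).2 == j))].
Definition decff n k (c : {ffun 'I_n -> bool * option 'I_k}) := [set Dff c j | j : option 'I_k].
Definition BadFF n r : {set {set {set 'I_n}}} :=
  [set H | (H \in [set decff c | c : {ffun 'I_n -> bool * option 'I_r.-1}]) && (r <= #|H|)].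

Lemma BadFF_card n r : 0 < r -> #|BadFF n r| <= 2 ^ n * r ^ n.
Proof.
move=> r0.
apply: leq_trans (_ : #|[set decff c | c : {ffun 'I_n -> bool * option 'I_r.-1}]| <= _).
  by apply: subset_leq_card; apply/fintype.subsetP => H; rewrite inE => /andP[].
apply: leq_trans (leq_imset_card _ _) _.
by rewrite card_ffun card_prod card_bool card_option !card_ord expnMn prednK.
Qed.

Lemma ff_bad n r (x0 : {set 'I_n}) S : 0 < r -> focal r x0 S -> x0 |: S \in BadFF n r.
Proof.
move=> r0 /andP[/andP[nx /eqP cS] /forallP hf].
have [e [ei He]] := enum_bij cS.
pose Ti (i : 'I_n) := [set j | (i \in e j) != (i \in x0)].
have cT : forall i, #|Ti i| <= 1.
  move=> i; have := hf i; have := card_sepC S (fun B => (i \in B) == (i \in x0)).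
  rewrite /Ti (card_pre (fun A : {set 'I_n} => (i \in A) != (i \in x0)) ei) -He cS.
  set a := #|[set A in S | (i \in A) == (i \in x0)]|.
  set b := #|[set A in S | (i \in A) != (i \in x0)]|.
  lia.
pose c := [ffun i => (i \in x0, [pick j in Ti i])].
have D0 : Dff c None = x0 by apply/setP => i; rewrite /Dff inE ffunE /= addbF.
have De : forall j, Dff c (Some j) = e j.
  move=> j; apply/setP => i; rewrite /Dff inE ffunE /= pick_le1 // inE.
  by case: (i \in x0); case: (i \in e j).
rewrite inE finset.cardsU1 nx cS add1n prednK // leqnn andbT; apply/imsetP; exists c => //.
rewrite He /decff; apply/setP => A; apply/setU1P/imsetP.
  case=> [->|/imsetP[j _ ->]]; first by exists None.
  by exists (Some j); rewrite ?De.
by case=> -[j|] _ ->; [right; rewrite De mem_imset | left].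
Qed.

Lemma nat_glue (q A X Y f B : nat) : 0 < A ->
  A * X <= q * A * f + B -> B <= X * Y -> 2 * Y <= A -> X <= 2 * q * f.
Proof.
move=> A0 h1 h2 h3.
have : A * X <= A * (2 * q * f) by nia.
by rewrite leq_pmul2l.
Qed.

Lemma lower_ns r n q : 0 < r -> 0 < q -> 2 * r.+1 ^ n <= q ^ r.-1 ->
  2 ^ n <= 2 * q * g_ns r n.
Proof.
move=> r0 q0 hq.
have hB : forall H, H \in BadNS n r -> r <= #|H| by move=> H; rewrite inE => /andP[].
have [F [hF hA]] := @alteration _ (BadNS n r) r q.-1 r0 hB.
rewrite prednK // card_sets_n in hA.
have hg : #|F| <= g_ns r n.
  apply: leq_bigmax_cond; apply/negP => /existsP[H /andP[HF hn]].
  by have := hF H (ns_bad hn); rewrite HF.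
apply: leq_trans (_ : 2 * q * #|F| <= _); last by rewrite leq_mul2l hg orbT.
apply: (@nat_glue q (q ^ r.-1) (2 ^ n) (r.+1 ^ n) #|F| #|BadNS n r|).
- by rewrite expn_gt0 q0.
- by move: hA; rewrite -{2}(prednK r0) expnS (mulnC q).
- exact: BadNS_card.
- exact: hq.
Qed.

Lemma lower_ff r n q : 0 < r -> 0 < q -> 2 * r ^ n <= q ^ r.-1 ->
  2 ^ n <= 2 * q * g_ff r n.
Proof.
move=> r0 q0 hq.
have hB : forall H, H \in BadFF n r -> r <= #|H| by move=> H; rewrite inE => /andP[].
have [F [hF hA]] := @alteration _ (BadFF n r) r q.-1 r0 hB.
rewrite prednK // card_sets_n in hA.
have hg : #|F| <= g_ff r n.
  apply: leq_bigmax_cond; apply/negP => /existsP[x0 /existsP[S /and3P[xF SF foc]]].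
  apply: (negP (hF _ (ff_bad r0 foc))).
  by apply/fintype.subsetP=> y; rewrite !inE => /orP[/eqP ->|/(fintype.subsetP SF)].
apply: leq_trans (_ : 2 * q * #|F| <= _); last by rewrite leq_mul2l hg orbT.
apply: (@nat_glue q (q ^ r.-1) (2 ^ n) (r ^ n) #|F| #|BadFF n r|).
- by rewrite expn_gt0 q0.
- by move: hA; rewrite -{2}(prednK r0) expnS (mulnC q).
- exact: BadFF_card.
- exact: hq.
Qed.


Section RL.
Local Open Scope ring_scope.

Lemma real_lower (R : realType) (k L : nat) (G : nat -> nat) : (0 < k)%N -> (0 < L)%N ->
  (forall n q, (0 < q)%N -> (2 * L ^ n <= q ^ k)%N -> (2 ^ n <= 2 * q * G n)%N) ->
  forall n, (1/6 : R) * (2 / (L%:R `^ (k%:R)^-1)) ^+ n <= (G n)%:R.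
Proof.
move=> k0 L0 hG n.
have ex : exists q, (2 * L ^ n <= q ^ k)%N.
  exists (2 * L ^ n)%N; rewrite -{1}(expn1 (2 * L ^ n)) leq_pexp2l //.
  by rewrite muln_gt0 expn_gt0 L0.
case: (ex_minnP ex) => q hq hmin.
have q0 : (0 < q)%N.
  case: q hq {hmin} => // ; rewrite exp0n //; rewrite leqn0 muln_eq0 expn_eq0; lia.
have hlt : ((q.-1) ^ k < 2 * L ^ n)%N.
  rewrite ltnNge; apply/negP => h; have := hmin _ h; lia.
have hX := hG n q q0 hq.
set a : R := L%:R `^ (k%:R)^-1.
have ha0 : 0 <= a by exact: powR_ge0.
have hak : a ^+ k = L%:R.
  rewrite /a -powR_mulrn ?powR_ge0 // -powRrM mulVf ?powRr1 //.
  by rewrite pnatr_eq0; lia.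
have ha1 : 1 <= a.
  rewrite leNgt; apply/negP => h.
  have : a ^+ k < 1 by rewrite exprn_ilt1 //; lia.
  by rewrite hak ltNge ler1n L0.
have han : 1 <= a ^+ n by exact: exprn_ege1.
have hq3 : (q%:R : R) <= 3 * a ^+ n.
  have h1 : ((q.-1)%:R : R) < 2 * a ^+ n.
    rewrite ltNge; apply/negP => h.
    have := lerXn2r k _ _ h; rewrite !nnegrE ler0n mulr_ge0 ?exprn_ge0 //.
    move=> /(_ isT isT); rewrite exprMn -exprM mulnC exprM hak => h2.
    have h3 : ((2 * L ^ n)%N%:R : R) <= ((q.-1) ^ k)%N%:R.
      rewrite natrM !natrX; apply: le_trans h2; apply: ler_wpM2r.
        by rewrite exprn_ge0.
      rewrite -[X in X <= _]expr1; apply: ler_weXn2l => //; rewrite ler1n //.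
    by move: h3; rewrite ler_nat leqNgt hlt.
  have -> : (q%:R : R) = (q.-1)%:R + 1 by rewrite natr1 prednK.
  lra.
rewrite expr_div_n mulrA ler_pdivrMr; last by apply: lt_le_trans han.
have hX' : (2 ^+ n : R) <= 2 * q%:R * (G n)%:R.
  by move: hX; rewrite -(ler_nat R) natrM natrM natrX.
have hG0 : (0 : R) <= (G n)%:R by [].
have : (q%:R : R) * (G n)%:R <= 3 * a ^+ n * (G n)%:R by apply: ler_wpM2r.
set A := a ^+ n; set X := (G n)%:R; set Q := (q%:R : R); set P := (2 ^+ n : R).
move: hX'; rewrite -/X -/Q -/P.
lra.
Qed.

End RL.


Theorem theorem1p3 (r : nat) (hr : 3 <= r) :
  (forall n : nat, 1 <= n ->
     g_ns r n <= g_ff r n /\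
     g_ff r n <= r.-1 * 2 ^ ceil_div (r.-2 * n) r.-1) /\
  (forall R : realType,
     exists cns : R, exists cff : R,
       (0 < cns)%R /\ (0 < cff)%R /\
       (forall n : nat, 1 <= n ->
          (cns * (2 / (r.+1%:R `^ (r.-1%:R)^-1)) ^+ n <= (g_ns r n)%:R)%R /\
          (cff * (2 / (r%:R `^ (r.-1%:R)^-1)) ^+ n <= (g_ff r n)%:R)%R)).
Proof.
have r0 : (0 < r)%N by lia.
have k0 : (0 < r.-1)%N by lia.
split.
  move=> n _; split; [apply: ns_le_ff; lia | exact: ff_upper].
move=> R; exists (1/6)%R, (1/6)%R.
have h6 : ((0 : R) < 1/6)%R by rewrite divr_gt0.
split; first exact: h6; split; first exact: h6.
move=> n _; split.
  apply: (@real_lower R r.-1 r.+1 (fun n => g_ns r n)) => // m q q0 hq.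
  exact: lower_ns.
apply: (@real_lower R r.-1 r (fun n => g_ff r n)) => // m q q0 hq.
exact: lower_ff.
Qed.
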